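(* Let $u:\mathbb T_n^d\to(0,1)$, $\mu=\bigotimes_{x\in\mathbb T^d_n}\mathrm{Bern}(u_x)$ on $\Omega_n=\{0,1\}^{\mathbb T_n^d}$, let $f:\Omega_n\to[0,\infty)$ be a density with respect to $\mu$, let $x,y\in\mathbb T_n^d$, and let $h:\Omega_n\to\mathbb R$ satisfy $h(\eta^{x,y})=h(\eta)$ for all $\eta$. Then \[ \int h(\omega_y-\omega_x)f\,d\mu=\int h\,s_{x,y}\,\nabla_{x,y}f\,d\mu-(u_y-u_x)\int h\,\omega_x\omega_y f\,d\mu, \] where $s_{x,y}=\dfrac{\eta_x(1-\eta_y)}{u_x(1-u_y)}$.
   Context: $\mathbb T_n^d=\mathbb Z^d/n\mathbb Z^d$; $\eta^{x,y}$ is the configuration obtained from $\eta$ by exchanging the values $\eta_x,\eta_y$; $\nabla_{x,y}f(\eta)=f(\eta^{x,y})-f(\eta)$; $\omega_x=(\eta_x-u_x)/(u_x(1-u_x))$; a density means $\int f\,d\mu=1$. *)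

(* Defs.v *)
From HB Require Import structures.
From mathcomp Require Import all_boot all_order all_algebra.
From mathcomp Require Import reals.
Set Implicit Arguments. Unset Strict Implicit. Unset Printing Implicit Defensive.
Import Order.TTheory GRing.Theory Num.Theory.
Local Open Scope ring_scope.

(* The discrete torus T_n^d = Z^d / n Z^d, represented as functions
   'I_d -> 'I_n (coordinates modulo n). *)
Definition torus (n d : nat) : finType := {ffun 'I_d -> 'I_n}.

Definition config (n d : nat) : finType := {ffun torus n d -> bool}.

Definition occ {R : realType} {n d} (eta : config n d) (z : torus n d) : R :=
  (eta z)%:R.

Definition swap {n d} (x y : torus n d) (eta : config n d) : config n d :=
  [ffun z => if z == x then eta y else if z == y then eta x else eta z].

Definition bern_prod {R : realType} {n d} (u : torus n d -> R) (eta : config n d) : R :=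
  \prod_(z : torus n d) (if eta z then u z else 1 - u z).

Definition integ {R : realType} {n d} (u : torus n d -> R)
  (F : config n d -> R) : R :=
  \sum_(eta : config n d) F eta * bern_prod u eta.

Definition nabla {R : realType} {n d} (x y : torus n d)
  (f : config n d -> R) (eta : config n d) : R :=
  f (swap x y eta) - f eta.

Definition omega {R : realType} {n d} (u : torus n d -> R) (z : torus n d)
  (eta : config n d) : R :=
  (occ eta z - u z) / (u z * (1 - u z)).

Definition s_xy {R : realType} {n d} (u : torus n d -> R) (x y : torus n d)
  (eta : config n d) : R :=
  occ eta x * (1 - occ eta y) / (u x * (1 - u y)).

(* Main.v *)
Require Import Defs.
From HB Require Import structures.
From mathcomp Require Import all_boot all_order all_algebra.
From mathcomp Require Import reals.
From mathcomp Require Import ring lra.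
Import Order.TTheory GRing.Theory Num.Theory.
Local Open Scope ring_scope.

Section Aux.
Variables (R : realType) (n d : nat).
Implicit Types (u : torus n d -> R) (eta : config n d).

Lemma swapE (x y : torus n d) eta z :
  swap x y eta z = if z == x then eta y else if z == y then eta x else eta z.
Proof. by rewrite /swap ffunE. Qed.

Lemma swapK (x y : torus n d) : involutive (swap x y).
Proof.
move=> eta; apply/ffunP=> z; rewrite !swapE.
case: (eqVneq z x) => [->|zx]; first by rewrite eqxx; case: (eqVneq x y) => [->|]; rewrite ?eqxx.
by case: (eqVneq z y) => [->|zy]; rewrite ?eqxx //; case: (eqVneq y x) => [->|].
Qed.

Lemma swap_same (x : torus n d) eta : swap x x eta = eta.
Proof. by apply/ffunP=> z; rewrite swapE; case: eqVneq => [->|]. Qed.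

Definition cb u z (b : bool) : R := if b then u z else 1 - u z.

Lemma bern_split u (x y : torus n d) eta : x != y ->
  bern_prod u eta = cb u x (eta x) * cb u y (eta y) *
    \prod_(z | (z != x) && (z != y)) cb u z (eta z).
Proof.
move=> xy; rewrite /bern_prod (bigD1 x) //= (bigD1 y) //=; last by rewrite eq_sym.
rewrite mulrA; congr (_ * _); apply: eq_bigl => z; by rewrite andbC.
Qed.

Lemma swap_prod u (x y : torus n d) eta : x != y ->
  bern_prod u (swap x y eta) = cb u x (eta y) * cb u y (eta x) *
    \prod_(z | (z != x) && (z != y)) cb u z (eta z).
Proof.
move=> xy; have yx : y != x by rewrite eq_sym.
rewrite (@bern_split u x y (swap x y eta) xy) !swapE !eqxx (negbTE yx).
congr (_ * _); apply: eq_bigr => z /andP [zx zy]; by rewrite swapE (negbTE zx) (negbTE zy).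
Qed.

Lemma integ_sub u (F G : config n d -> R) :
  integ u (fun e => F e - G e) = integ u F - integ u G.
Proof.
rewrite /integ -sumrB; apply: eq_bigr => e _; by rewrite mulrBl.
Qed.

Lemma integ_scale u c (F : config n d -> R) :
  integ u (fun e => c * F e) = c * integ u F.
Proof.
rewrite /integ mulr_sumr; apply: eq_bigr => e _; by rewrite mulrA.
Qed.

Lemma integ_ext u (F G : config n d -> R) : (forall e, F e = G e) ->
  integ u F = integ u G.
Proof. by move=> H; rewrite /integ; apply: eq_bigr => e _; rewrite H. Qed.

End Aux.

Lemma alg (R : realType) (a b : bool) (ux uy : R) : 0 < ux < 1 -> 0 < uy < 1 ->
  ((b%:R : R) - uy) / (uy * (1 - uy)) - ((a%:R : R) - ux) / (ux * (1 - ux)) =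
  (1 - (a%:R : R)) * (b%:R : R) / ((1 - ux) * uy) - (a%:R : R) * (1 - (b%:R : R)) / (ux * (1 - uy))
  - (uy - ux) * (((a%:R : R) - ux) / (ux * (1 - ux)) * (((b%:R : R) - uy) / (uy * (1 - uy)))).
Proof.
move=> /andP[hx1 hx2] /andP[hy1 hy2].
have h1 : ux != 0 by rewrite gt_eqF.
have h2 : uy != 0 by rewrite gt_eqF.
have h3 : 1 - ux != 0 by rewrite subr_eq0 eq_sym lt_eqF.
have h4 : 1 - uy != 0 by rewrite subr_eq0 eq_sym lt_eqF.
case: a; case: b => /=; field; by rewrite ?h1 ?h2 ?h3 ?h4.
Qed.

Theorem lemmaE1 (R : realType) (n d : nat) (hn : (0 < n)%N)
  (u : torus n d -> R) (hu : forall z, 0 < u z < 1)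
  (f : config n d -> R) (hf0 : forall eta, 0 <= f eta)
  (hf1 : integ u f = 1)
  (x y : torus n d)
  (h : config n d -> R) (hh : forall eta, h (swap x y eta) = h eta) :
  integ u (fun eta => h eta * (omega u y eta - omega u x eta) * f eta) =
  integ u (fun eta => h eta * s_xy u x y eta * nabla x y f eta)
  - (u y - u x) * integ u (fun eta => h eta * omega u x eta * omega u y eta * f eta).
Proof.
pose t01 eta := (1 - occ eta x) * occ eta y / ((1 - u x) * u y).
have key : integ u (fun eta => h eta * s_xy u x y eta * f (swap x y eta)) =
           integ u (fun eta => h eta * t01 eta * f eta).
  rewrite /integ (reindex_inj (inv_inj (@swapK n d x y))) /=.
  apply: eq_bigr => eta _; rewrite (@swapK n d x y) hh.
  case: (eqVneq x y) => [exy|xy]; last have xy' : y != x by rewrite eq_sym.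
    subst y; rewrite /t01 /s_xy !(@swap_same n d).
    rewrite /occ; case: (eta x) => /=; rewrite ?subrr ?mul0r ?mulr0 ?mul0r ?mulr0 ?mul0r //. 
  rewrite (@swap_prod R n d u x y eta xy) (@bern_split R n d u x y eta xy) /t01 /s_xy /occ !swapE !eqxx (negbTE (xy' : y != x)).
  have := hu x; have := hu y; move=> /andP[hy1 hy2] /andP[hx1 hx2].
  have h1 : u x != 0 by rewrite gt_eqF.
  have h2 : u y != 0 by rewrite gt_eqF.
  have h3 : 1 - u x != 0 by rewrite subr_eq0 eq_sym lt_eqF.
  have h4 : 1 - u y != 0 by rewrite subr_eq0 eq_sym lt_eqF.
  rewrite /cb; case: (eta x); case: (eta y) => /=; field; by rewrite ?h1 ?h2 ?h3 ?h4.
have -> : integ u (fun eta => h eta * s_xy u x y eta * nabla x y f eta) =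
  integ u (fun eta => h eta * t01 eta * f eta) - integ u (fun eta => h eta * s_xy u x y eta * f eta).
  by rewrite -key -integ_sub; apply: integ_ext => e; rewrite /nabla mulrBr.
rewrite -integ_scale -!integ_sub; apply: integ_ext => e.
have := @alg R (e x) (e y) _ _ (hu x) (hu y).
rewrite /omega /t01 /s_xy /occ /= => ->; ring.
Qed.
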